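(* Let $m,n \in \mathbb{N}$, $S = (s_1,\dots,s_n)^T \in \mathbb{N}^n$ with $s_k \le 2^m$, fix $c \in \mathbb{N}$ and let $N = n^c$. Define $U = (u_1,\dots,u_n)^T$ by $u_k = \left\lfloor N \cdot \frac{s_k}{\|S\|}\right\rfloor$, let $c_a = \frac{\sum_{k=1}^n u_k s_k}{\|U\|\cdot\|S\|}$ (the cosine of the angle between $U$ and $S$) and $d^{\star} = \frac{\sqrt{n}}{2}\sqrt{1-c_a^2}$. Let $Q \in \{0,1\}^n$ satisfy $$U^T\cdot\left(Q - \left(\frac{1}{2}\cdot 1_{n\times 1} + \frac{U}{\|U\|}\cdot d\right)\right) = 0$$ for some $d$ with $-d^{\star} \le d \le d^{\star}$ (equivalently $U^T Q = \frac{U^T 1_{n\times 1}}{2} + d\,\|U\|$). Then $$\left| \frac{S^T \cdot Q}{\frac{S^T \cdot 1_{n\times 1}}{2}} - 1 \right| \le 2\cdot\frac{n}{N}.$$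
   Context: $1_{n\times 1}$ denotes the all-ones vector in $\mathbb{R}^n$ and $\|\cdot\|$ the Euclidean norm. *)

(* Defs.v *)
From mathcomp Require Import all_boot all_order all_algebra.
From mathcomp Require Import reals.
Set Implicit Arguments. Unset Strict Implicit. Unset Printing Implicit Defensive.
Import Order.TTheory GRing.Theory Num.Theory.
Local Open Scope ring_scope.

Definition enorm (R : rcfType) (n : nat) (v : 'I_n -> R) : R :=
  Num.sqrt (\sum_(k < n) v k ^+ 2).

Definition dotp (R : pzRingType) (n : nat) (v w : 'I_n -> R) : R :=
  \sum_(k < n) v k * w k.

Definition Uvec (R : realType) (n c : nat) (S : 'I_n -> nat) : 'I_n -> R :=
  fun k => (Num.floor ((n ^ c)%N%:R * (S k)%:R / enorm (fun j => (S j)%:R : R)))%:~R.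

Definition cos_a (R : realType) (n c : nat) (S : 'I_n -> nat) : R :=
  let Sr := fun j => (S j)%:R : R in
  let U := Uvec R c S in
  dotp U Sr / (enorm U * enorm Sr).

Definition dstar (R : realType) (n c : nat) (S : 'I_n -> nat) : R :=
  Num.sqrt n%:R / 2 * Num.sqrt (1 - cos_a R c S ^+ 2).

(* Main.v *)
Require Import Defs.
From mathcomp Require Import all_boot all_order all_algebra.
From mathcomp Require Import reals.
From mathcomp Require Import ring lra.
Import Order.TTheory GRing.Theory Num.Theory.
Local Open Scope ring_scope.

Theorem theorem2p3 (R : realType) (m n c : nat) (S : 'I_n -> nat)
  (hS : forall k, (S k <= 2 ^ m)%N)
  (hS0 : exists k, S k <> 0%N)
  (Q : 'I_n -> bool) (d : R)
  (hd : - dstar R c S <= d <= dstar R c S)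
  (hQ : let U := Uvec R c S in
        dotp U (fun k => (Q k)%:R - (2^-1 * 1 + U k / enorm U * d)) = 0) :
  let Sr := fun k => (S k)%:R : R in
  `| dotp Sr (fun k => (Q k)%:R) / (dotp Sr (fun _ => 1) / 2) - 1 |
    <= 2 * (n%:R / (n ^ c)%N%:R).
Proof.
pose Sr := fun k => (S k)%:R : R.
change (`| dotp Sr (fun k => (Q k)%:R) / (dotp Sr (fun _ => 1) / 2) - 1 | <= 2 * (n%:R / (n ^ c)%N%:R)).
move: hQ; rewrite /= => hQ.
have s0 : forall k, 0 <= Sr k by move=> k; rewrite /Sr ler0n.
have [k0 hk0] := hS0.
have n0 : (0 < n)%N := leq_ltn_trans (leq0n _) (ltn_ord k0).
pose T := \sum_(k < n) Sr k.
have sT : forall k, Sr k <= T.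
  by move=> k; rewrite /T (bigD1 k) //= lerDl sumr_ge0.
have T0 : 0 < T.
  apply: (lt_le_trans _ (sT k0)); rewrite /Sr ltr0n lt0n; exact/eqP.
pose sig := enorm Sr.
have sig2 : sig ^+ 2 = \sum_(k < n) Sr k ^+ 2.
  by rewrite /sig /enorm sqr_sqrtr // sumr_ge0 // => k _; rewrite sqr_ge0.
have sig0 : 0 < sig.
  rewrite /sig /enorm sqrtr_gt0 (bigD1 k0) //=.
  have h1 : 0 <= \sum_(i < n | i != k0) Sr i ^+ 2 by rewrite sumr_ge0 // => k _; rewrite sqr_ge0.
  have h2 : 0 < Sr k0 ^+ 2 by rewrite exprn_gt0 // /Sr ltr0n lt0n; exact/eqP.
  lra.
have sigT : sig <= T.
  rewrite /sig /enorm -(ger0_norm (ltW T0)) -sqrtr_sqr ler_wsqrtr //.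
  rewrite expr2 /T mulr_suml; apply: ler_sum => k _.
  by rewrite expr2 ler_wpM2l.
pose NN : R := (n ^ c)%N%:R.
have N0 : 0 < NN by rewrite /NN ltr0n expn_gt0 n0.
pose u := Uvec R c S.
pose e := fun k => NN * Sr k / sig - u k.
have e01 : forall k, 0 <= e k < 1.
  move=> k; rewrite /e /u /Uvec.
  have := floor_itv (NN * Sr k / sig); rewrite intrD /= => /andP[h1 h2].
  rewrite subr_ge0 -/(enorm Sr) -/sig h1 /=. lra.
have ue : forall k, NN * Sr k = sig * (u k + e k).
  move=> k; rewrite /e addrC subrK mulrCA divff ?mulr1 //; by rewrite gt_eqF.
pose a := enorm u.
have a2 : a ^+ 2 = \sum_(k < n) u k ^+ 2.
  by rewrite /a /enorm sqr_sqrtr // sumr_ge0 // => k _; rewrite sqr_ge0.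
have a0 : 0 <= a by rewrite /a /enorm sqrtr_ge0.
pose w := fun k => 2 * (Q k)%:R - 1 : R.
have hw : forall k, `|w k| <= 1.
  move=> k; rewrite /w; case: (Q k) => /=.
    have h : (2:R) * 1 - 1 = 1 by lra.
    by rewrite h normr1.
  by rewrite mulr0 sub0r normrN normr1.
have uw : \sum_(k < n) u k * w k = 2 * d * a.
  have hQ' : \sum_(k < n) u k * ((Q k)%:R - (2^-1 * 1 + u k / a * d)) = 0 by exact: hQ.
  have -> : \sum_(k < n) u k * w k = \sum_(k < n) (2 * (u k * ((Q k)%:R - (2^-1 * 1 + u k / a * d))) + 2 * (d / a) * u k ^+ 2).
    apply: eq_bigr => k _.
    have h2 : (2:R) * 2^-1 = 1 by rewrite divff // pnatr_eq0.
    move: h2; set x := (2:R)^-1 => h2.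
    have -> : w k = 2 * (Q k)%:R - 2 * x by rewrite h2.
    ring.
  rewrite big_split /= -!mulr_sumr hQ' -a2 mulr0 add0r.
  have [a_eq0|an0] := eqVneq a 0; first by rewrite a_eq0 invr0 !(mulr0, mul0r).
  by field.
pose t := NN / sig.
pose b := \sum_(k < n) u k * Sr k.
have esum : \sum_(k < n) e k ^+ 2 = t ^+ 2 * \sum_(k < n) Sr k ^+ 2 - 2 * t * b + \sum_(k < n) u k ^+ 2.
  rewrite /b !mulr_sumr -sumrB -big_split /=; apply: eq_bigr => k _.
  rewrite /e /t; ring.
have ele : \sum_(k < n) e k ^+ 2 <= n%:R.
  have -> : (n%:R : R) = \sum_(k < n) 1 by rewrite sumr_const card_ord.
  apply: ler_sum => k _; have := e01 k => /andP[h1 h2]; nra.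
have key : a ^+ 2 - b ^+ 2 / sig ^+ 2 <= n%:R.
  apply: le_trans ele; rewrite esum -sig2 -a2.
  have h := sqr_ge0 (t * sig - b / sig).
  have e2 : (t * sig - b / sig) ^+ 2 = t ^+ 2 * sig ^+ 2 - 2 * t * b + b ^+ 2 / sig ^+ 2.
    rewrite /t; field; by rewrite gt_eqF.
  rewrite e2 in h.
  lra.
pose s1 := Num.sqrt (1 - cos_a R c S ^+ 2).
have s1a : s1 ^+ 2 * a ^+ 2 <= n%:R.
  have [hle|hgt] := lerP (1 - cos_a R c S ^+ 2) 0.
    by rewrite /s1 ler0_sqrtr // expr0n /= mul0r ler0n.
  rewrite /s1 sqr_sqrtr; last exact: ltW.
  have [a_eq0|an0] := eqVneq a 0; first by rewrite a_eq0 expr0n /= mulr0 ler0n.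
  apply: le_trans key; rewrite /cos_a -/u -/Sr -/a -/sig.
  have -> : dotp u Sr = b by [].
  rewrite le_eqVlt; apply/orP; left; apply/eqP; field.
  by rewrite an0 gt_eqF.
have s10 : 0 <= s1 by rewrite sqrtr_ge0.
pose D := dstar R c S.
have hD : D = Num.sqrt n%:R / 2 * s1 by [].
have r2 : Num.sqrt (n%:R : R) ^+ 2 = n%:R by rewrite sqr_sqrtr ?ler0n.
have r0 : 0 <= Num.sqrt (n%:R : R) by rewrite sqrtr_ge0.
have nR0 : 0 < (n%:R : R) by rewrite ltr0n.
have Da : D * a <= n%:R / 2.
  have h1 : (D * a) ^+ 2 <= (n%:R / 2) ^+ 2.
    have E : (D * a) ^+ 2 = (Num.sqrt (n%:R : R)) ^+ 2 / 4 * (s1 ^+ 2 * a ^+ 2).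
      by rewrite hD; field.
    rewrite r2 in E; rewrite E.
    have -> : (n%:R / 2 : R) ^+ 2 = n%:R / 4 * n%:R by field.
    apply: ler_wpM2l => //; rewrite divr_ge0 ?ler0n //.
  have h2 : 0 <= D * a by rewrite hD mulr_ge0 // mulr_ge0 // divr_ge0.
  have h3 : 0 <= (n%:R : R) / 2 by rewrite divr_ge0 ?ler0n.
  nra.
have hda : `| 2 * d * a | <= n%:R.
  move: hd; rewrite -/D => /andP[h1 h2].
  rewrite ler_norml; apply/andP; split; nra.
pose P := dotp Sr (fun k => (Q k)%:R).
have TT : dotp Sr (fun _ => 1) = T by apply: eq_bigr => k _; rewrite mulr1.
rewrite -/P TT.
have X1 : 2 * P - T = \sum_(k < n) Sr k * w k.
  rewrite /P /dotp /T mulr_sumr -sumrB; apply: eq_bigr => k _; rewrite /w; ring.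
have X2 : NN * (2 * P - T) = sig * (2 * d * a + \sum_(k < n) e k * w k).
  rewrite X1 mulr_sumr -uw -big_split mulr_sumr /=; apply: eq_bigr => k _.
  by rewrite mulrA ue; ring.
have ew : `| \sum_(k < n) e k * w k | <= n%:R.
  apply: le_trans (ler_norm_sum _ _ _) _.
  have -> : (n%:R : R) = \sum_(k < n) 1 by rewrite sumr_const card_ord.
  apply: ler_sum => k _; rewrite normrM.
  have := e01 k => /andP[h1 h2]; have := hw k; have := normr_ge0 (w k).
  rewrite ger0_norm //; nra.
have hX : NN * `|2 * P - T| <= 2 * n%:R * T.
  rewrite -(gtr0_norm N0) -normrM X2 normrM (gtr0_norm sig0).
  have := ler_normD (2 * d * a) (\sum_(k < n) e k * w k).
  have := normr_ge0 (2 * d * a + \sum_(k < n) e k * w k).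
  nra.
have -> : P / (T / 2) - 1 = (2 * P - T) / T by field; rewrite gt_eqF.
rewrite normrM [`|T^-1|]ger0_norm; last by rewrite invr_ge0 ltW.
rewrite -/(_ / T) ler_pdivrMr //.
have -> : 2 * (n%:R / NN) * T = (2 * n%:R * T) / NN by rewrite mulrA mulrAC -!mulrA.
rewrite ler_pdivlMr // mulrC //.
Qed.
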